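(* Let $d \ge 1$. There exists a ReLU network $f:\mathbb{R}^d\to\mathbb{R}$ with $d$ inputs, one hidden layer of $d$ ReLU neurons, and one output, i.e. a function of the form $f(z) = c_0 + \sum_{k=1}^{d} c_k\,\mathrm{ReLU}(w_k^\top z + b_k)$ with $c_k, b_k \in \mathbb{R}$, $w_k\in\mathbb{R}^d$, such that for all $x \in \mathbb{R}^d$ and all $\xi \in \mathbb{R}$, $$f(x - \xi 1_d) \le 0 \iff \max\{x_1,\dots,x_d\} \le \xi,$$ where $1_d$ is the all-ones vector in $\mathbb{R}^d$.
   Context: $\mathrm{ReLU}(t)=\max(t,0)$. The expression $x-\xi$ in the paper denotes subtracting the scalar $\xi$ from every coordinate of $x$, written here as $x-\xi 1_d$. *)

(* Defs.v *)
From mathcomp Require Import all_boot all_order all_algebra.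
Set Implicit Arguments. Unset Strict Implicit. Unset Printing Implicit Defensive.
Import Order.TTheory GRing.Theory Num.Theory.
Local Open Scope ring_scope.

Definition relu {R : realDomainType} (t : R) : R := Num.max t 0.

Definition relu_net {R : realDomainType} (d : nat) (c0 : R) (c b : 'I_d -> R)
  (w : 'I_d -> 'I_d -> R) (z : 'I_d -> R) : R :=
  c0 + \sum_(k < d) c k * relu (\sum_(j < d) w k j * z j + b k).

(* maximum of the coordinates of x in R^d, for d >= 1: the fold of Num.max
   over all coordinates, seeded with the first coordinate x_1 (the seed is
   0 only in the meaningless case d = 0). *)
Definition vmax {R : realDomainType} (d : nat) (x : 'I_d -> R) : R :=
  \big[Num.max/head 0 [seq x i | i <- enum 'I_d]]_(i < d) x i.

(* Main.v *)
Require Import Defs.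
From mathcomp Require Import all_boot all_order all_algebra.
From mathcomp Require Import reals.
Import Order.TTheory GRing.Theory Num.Theory.
Local Open Scope ring_scope.

Lemma vmax_iff (R : realDomainType) (d : nat) (hd : (1 <= d)%N) (x : 'I_d -> R) (xi : R) :
  vmax x <= xi <-> (forall i, x i <= xi).
Proof.
rewrite /vmax; split.
- move=> H i; apply: le_trans H.
  rewrite unlock /reducebig.
  have : i \in index_enum 'I_d by exact: mem_index_enum.
  elim: (index_enum 'I_d) => [//|a r IH] /=.
  rewrite inE => /orP [/eqP ->|/IH h]; rewrite le_max ?lexx //.
  by rewrite h orbT.
- move=> H; apply: (big_ind (fun v => v <= xi)) => //.
  + case: d hd x H => [//|d'] _ x H.
    by rewrite enum_ordSl /=.
  + by move=> a b ha hb; rewrite ge_max ha hb.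
Qed.

Theorem theorem1 (R : realType) (d : nat) (hd : (1 <= d)%N) :
  exists (c0 : R) (c b : 'I_d -> R) (w : 'I_d -> 'I_d -> R),
    forall (x : 'I_d -> R) (xi : R),
      (relu_net c0 c b w (fun j => x j - xi) <= 0) <-> (vmax x <= xi).
Proof.
exists 0, (fun _ => 1), (fun _ => 0), (fun k j => (k == j)%:R).
move=> x xi; rewrite vmax_iff // /relu_net add0r.
have E : forall k : 'I_d, \sum_(j < d) (k == j)%:R * (x j - xi) + 0 = x k - xi.
  move=> k; rewrite addr0 (bigD1 k) //= eqxx mul1r big1 ?addr0 //.
  by move=> j; rewrite eq_sym => /negPf ->; rewrite mul0r.
under eq_bigr => k _ do rewrite E mul1r.
split.
- move=> H i; rewrite -subr_le0.
  have : relu (x i - xi) <= 0.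
    apply: le_trans H; rewrite (bigD1 i) //= lerDl.
    by apply: sumr_ge0 => j _; rewrite /relu le_max lexx orbT.
  by rewrite /relu ge_max => /andP [].
- move=> H; rewrite big1 // => i _.
  by rewrite /relu; apply/max_idPr; rewrite subr_le0.
Qed.
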